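(* Let $k\ge 3$. For every $m\in\mathbb{Z}_{>0}$, $E^{2m}\in M(1)^++C_2(V_L^+)$.
   Context: $L=\mathbb{Z}\alpha$, $\langle\alpha,\alpha\rangle=2k$; $V_L=M(1)\otimes\mathbb{C}[L]$ the lattice VOA, $\theta$ the involution $\alpha(-n_1)\cdots\alpha(-n_r)\otimes e^{\beta}\mapsto(-1)^r\alpha(-n_1)\cdots\alpha(-n_r)\otimes e^{-\beta}$, $V_L^+$ its fixed points, $M(1)^{\pm}$ the $\pm1$-eigenspaces of $\theta$ on $M(1)$ (spanned by monomials $\alpha(-n_1)\cdots\alpha(-n_r)\mathbf 1$ with $r$ even, resp. odd). We write $E^m=e^{m\alpha}+e^{-m\alpha}$, $F^m=e^{m\alpha}-e^{-m\alpha}$ (identifying $e^{\beta}$ with $\mathbf 1\otimes e^\beta$). $C_2(V)$ is the span of $\{v_{-2}u:u,v\in V\}$. *)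

(* Defs.v *)
(* Concrete model of the rank-one lattice VOA
   V_L = M(1) (x) C[L],  L = Z alpha, <alpha,alpha> = 2k, over a field F
   (of characteristic 0 in the theorem), with trivial 2-cocycle
   (legitimate since L is even and of rank one). *)
From HB Require Import structures.
From mathcomp Require Import all_boot all_order all_algebra.
Set Implicit Arguments. Unset Strict Implicit. Unset Printing Implicit Defensive.
Import Order.TTheory GRing.Theory Num.Theory.
Local Open Scope ring_scope.

(* A basis monomial  alpha(-n_1)...alpha(-n_r) 1 (x) e^{p alpha}  is
   represented by the pair ([:: n_1; ...; n_r], p); the n_i are positive and
   their order is irrelevant (the alpha(-n) commute), see [coef]. *)
Definition mon := (seq nat * int)%type.

Section LatticeVOA.
Variable F : fieldType.
Variable k : nat.

(* A vector of V_L is a formal finite linear combination of monomials;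
   two vectors are equal iff all their coefficients [coef] agree. *)
Definition vec := seq (F * mon).

Definition coef (v : vec) (b : mon) : F :=
  \sum_(e <- v | perm_eq e.2.1 b.1 && (e.2.2 == b.2)) e.1.

Definition wfv (v : vec) : bool := all (fun e => all (fun n => 0 < n)%N e.2.1) v.

Definition scalev (c : F) (v : vec) : vec := [seq (c * e.1, e.2) | e <- v].
Definition linext (f : mon -> vec) (v : vec) : vec :=
  flatten [seq scalev e.1 (f e.2) | e <- v].

(* Heisenberg modes alpha(j), [alpha(i),alpha(j)] = 2k i delta_{i+j,0},
   alpha(0) = <alpha, . > on the lattice part. *)
Definition alpha_mon (j : int) (x : mon) : vec :=
  match j with
  | Posz 0 => [:: ((2 * k)%:R * x.2%:~R, x)]
  | Posz n.+1 =>
      [seq ((2 * k * n.+1)%:R, (take i x.1 ++ drop i.+1 x.1, x.2))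
      | i <- iota 0 (size x.1) & nth 0%N x.1 i == n.+1]
  | Negz n => [:: (1, (n.+1 :: x.1, x.2))]
  end.
Definition alpha (j : int) : vec -> vec := linext (alpha_mon j).

(* S_a = coefficient of z^a in E^-(-p alpha, z) = exp(sum_{n>0} p alpha(-n) z^n / n):
   a S_a = sum_{j=1}^a p alpha(-j) S_{a-j}. *)
Fixpoint Sop_aux (fuel a : nat) (p : int) (v : vec) : vec :=
  match a with
  | 0%N => v
  | _ => match fuel with
         | 0%N => [::]
         | fuel'.+1 =>
             scalev (p%:~R / a%:R)
               (flatten [seq alpha (- (j%:Z)) (Sop_aux fuel' (a - j) p v) | j <- iota 1 a])
         end
  end.
Definition Sop (a : nat) (p : int) (v : vec) : vec := Sop_aux a a p v.

(* T_b = coefficient of z^{-b} in E^+(-p alpha, z) = exp(-sum_{n>0} p alpha(n) z^{-n} / n):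
   b T_b = - sum_{j=1}^b p alpha(j) T_{b-j}. *)
Fixpoint Top_aux (fuel b : nat) (p : int) (v : vec) : vec :=
  match b with
  | 0%N => v
  | _ => match fuel with
         | 0%N => [::]
         | fuel'.+1 =>
             scalev (- (p%:~R / b%:R))
               (flatten [seq alpha (j%:Z) (Top_aux fuel' (b - j) p v) | j <- iota 1 b])
         end
  end.
Definition Top (b : nat) (p : int) (v : vec) : vec := Top_aux b b p v.

Definition shiftlat (p : int) (v : vec) : vec := [seq (e.1, (e.2.1, e.2.2 + p)) | e <- v].

Definition wt (x : mon) : nat := (sumn x.1 + k * (absz x.2) ^ 2)%N.

(* n-th mode of Y(e^{p alpha}, z) = E^-(-p alpha,z) E^+(-p alpha,z) e_{p alpha} z^{p alpha}
   on the basis monomial w *)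
Definition exp_mode_mon (p n : int) (w : mon) : vec :=
  flatten [seq
    let a := (b%:Z - (2 * k)%:Z * p * w.2 - n - 1)%R in
    if (0 <= a)%R then Sop (absz a) p (shiftlat p (Top b p [:: (1, w)])) else [::]
  | b <- iota 0 (sumn w.1).+1].

(* n-th mode of the vertex operator of the monomial (l, p), by the iterate
   formula  (alpha(-s) v)_m = sum_{i>=0} C(s+i-1,i) ( alpha(-s-i) v_{m+i}
                                           - (-1)^s v_{m-s-i} alpha(i) ),
   both sums being finite (truncated at a bound that exceeds all nonzero terms). *)
Fixpoint mode_aux (l : seq nat) (p m : int) (w : mon) : vec :=
  match l with
  | [::] => exp_mode_mon p m w
  | s :: l' =>
      flatten [seq
        scalev ('C(s + i - 1, i))%:R (alpha (- ((s + i)%N%:Z)) (mode_aux l' p (m + i%:Z) w))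
        ++ scalev (- ((-1) ^+ s * ('C(s + i - 1, i))%:R))
             (linext (mode_aux l' p (m - s%:Z - i%:Z)) (alpha_mon i%:Z w))
      | i <- iota 0 (wt (l', p) + wt w + absz m).+1]
  end.

Definition mode (v : vec) (m : int) (u : vec) : vec :=
  flatten [seq scalev e.1 (linext (mode_aux e.2.1 e.2.2 m) u) | e <- v].

Definition theta (v : vec) : vec :=
  [seq ((-1) ^+ size e.2.1 * e.1, (e.2.1, - e.2.2)) | e <- v].

Definition inVplus (v : vec) : Prop :=
  wfv v /\ forall b, coef (theta v) b = coef v b.

Definition inM1plus (v : vec) : bool :=
  all (fun e => [&& e.2.2 == 0, ~~ odd (size e.2.1) & all (fun n => 0 < n)%N e.2.1]) v.

Definition inC2plus (v : vec) : Prop :=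
  exists l : seq (F * vec * vec),
    (forall t, t \in l -> inVplus t.1.2 /\ inVplus t.2) /\
    forall b, coef v b = \sum_(t <- l) t.1.1 * coef (mode t.1.2 (-2) t.2) b.

Definition Evec (m : int) : vec := [:: (1, ([::], m)); (1, ([::], - m))].

End LatticeVOA.

(* Main.v *)
Require Import Defs.
From mathcomp Require Import all_boot all_order all_algebra.
From mathcomp Require Import ring zify.
Import GRing.Theory Num.Theory.
Local Open Scope ring_scope.

Lemma scalev_cat (F : fieldType) c (u v : vec F) : scalev c (u ++ v) = scalev c u ++ scalev c v.
Proof. exact: map_cat. Qed.
Lemma scalev_flatten (F : fieldType) c (vs : seq (vec F)) :
  scalev c (flatten vs) = flatten (map (scalev c) vs).
Proof. exact: map_flatten. Qed.
Lemma scalevA (F : fieldType) c d (v : vec F) : scalev c (scalev d v) = scalev (c * d) v.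
Proof. rewrite /scalev -map_comp; apply: eq_map => e /=; by rewrite mulrA. Qed.
Lemma scalev1 (F : fieldType) (v : vec F) : scalev 1 v = v.
Proof. rewrite /scalev; elim: v => //= [[c x] v ->]; by rewrite mul1r. Qed.
Lemma theta_cat (F : fieldType) (u v : vec F) : theta (u ++ v) = theta u ++ theta v.
Proof. exact: map_cat. Qed.
Lemma theta_flatten (F : fieldType) (vs : seq (vec F)) :
  theta (flatten vs) = flatten (map (@theta F) vs).
Proof. exact: map_flatten. Qed.
Lemma theta_scalev (F : fieldType) c (v : vec F) : theta (scalev c v) = scalev c (theta v).
Proof. rewrite /scalev /theta -!map_comp; apply: eq_map => e /=; by rewrite mulrCA. Qed.
Lemma linext_scalev (F : fieldType) (f : mon -> vec F) c v :
  linext f (scalev c v) = scalev c (linext f v).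
Proof.
rewrite /linext scalev_flatten -!map_comp; congr flatten; apply: eq_map => e /=.
by rewrite scalevA.
Qed.
Lemma linext_cat (F : fieldType) (f : mon -> vec F) u v :
  linext f (u ++ v) = linext f u ++ linext f v.
Proof. by rewrite /linext map_cat flatten_cat. Qed.
Lemma linext_flatten (F : fieldType) (f : mon -> vec F) vs :
  linext f (flatten vs) = flatten (map (linext f) vs).
Proof. elim: vs => //= v vs IH; by rewrite linext_cat IH. Qed.
Lemma flatten_nils (T : Type) (A : eqType) (s : seq A) (g : A -> seq T) :
  (forall x, x \in s -> g x = [::]) -> flatten (map g s) = [::].
Proof.
elim: s => //= x s IH H; rewrite H ?mem_head //= IH // => y Hy.
by apply: H; rewrite inE Hy orbT.
Qed.

Lemma vc_nil (F : fieldType) b : coef ([::] : vec F) b = 0.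
Proof. by rewrite /coef big_nil. Qed.
Lemma vc_cons (F : fieldType) (e : F * mon) v b :
  coef (e :: v) b = (if perm_eq e.2.1 b.1 && (e.2.2 == b.2) then e.1 else 0) + coef v b.
Proof. by rewrite /coef big_cons; case: ifP => _ //; rewrite add0r. Qed.
Lemma vc_cat (F : fieldType) (u v : vec F) b : coef (u ++ v) b = coef u b + coef v b.
Proof. by rewrite /coef big_cat. Qed.
Lemma vc_scalev (F : fieldType) c (v : vec F) b : coef (scalev c v) b = c * coef v b.
Proof. by rewrite /coef big_map big_distrr. Qed.
Lemma vc_theta (F : fieldType) (v : vec F) l p :
  coef (theta v) (l, p) = (-1) ^+ size l * coef v (l, - p).
Proof.
rewrite /coef big_map big_distrr /=; apply: eq_big => e /=.
  by rewrite eqr_oppLR.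
by move=> /andP[/perm_size -> _].
Qed.

Lemma theta_alpha_mon (F : fieldType) k j (x : mon) :
  theta (alpha_mon F k j x) = scalev (- (-1) ^+ size x.1) (alpha_mon F k j (x.1, - x.2)).
Proof.
case: x => l p; case: j => [[|n]|n] /=.
- rewrite /theta /scalev /= mulrNz; congr [:: (_, _)]; ring.
- rewrite /theta /scalev -!map_comp; apply/eq_in_map => i.
  rewrite mem_filter mem_iota => /andP[_ /andP[_ Hi]] /=.
  congr (_, _); rewrite size_cat size_take size_drop Hi.
  have E : (i + (size l - i.+1) = (size l).-1)%N by lia.
  rewrite E; case: (size l) Hi => [|s] _ //=; rewrite exprS; ring.
- rewrite /theta /scalev /= exprS; congr [:: (_, _)]; ring.
Qed.

Lemma theta_alpha (F : fieldType) k j (v : vec F) :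
  alpha k j (theta v) = scalev (-1) (theta (alpha k j v)).
Proof.
elim: v => // [[c [l p]] v IH].
rewrite /alpha /linext /= -/(linext _ _) -/(alpha k j _) IH.
rewrite theta_cat scalev_cat theta_scalev theta_alpha_mon !scalevA /=.
congr (scalev _ _ ++ _); ring.
Qed.

Lemma flatten_map_scalev (F : fieldType) (A : Type) c (g : A -> vec F) s :
  flatten [seq scalev c (g x) | x <- s] = scalev c (flatten [seq g x | x <- s]).
Proof. elim: s => //= x s ->; by rewrite scalev_cat. Qed.

Lemma Top_auxS (F : fieldType) k f b p (v : vec F) :
  Top_aux k f.+1 b.+1 p v = scalev (- (p%:~R / b.+1%:R))
    (flatten [seq alpha k (j%:Z) (Top_aux k f (b.+1 - j) p v) | j <- iota 1 b.+1]).
Proof. by []. Qed.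
Lemma Sop_auxS (F : fieldType) k f b p (v : vec F) :
  Sop_aux k f.+1 b.+1 p v = scalev (p%:~R / b.+1%:R)
    (flatten [seq alpha k (- (j%:Z)) (Sop_aux k f (b.+1 - j) p v) | j <- iota 1 b.+1]).
Proof. by []. Qed.

Lemma Top_theta (F : fieldType) k fuel b p (v : vec F) :
  Top_aux k fuel b p (theta v) = theta (Top_aux k fuel b (-p) v).
Proof.
elim: fuel b => [|f IH] [|b] //.
rewrite !Top_auxS theta_scalev theta_flatten -map_comp.
under eq_map => j do rewrite IH theta_alpha.
rewrite flatten_map_scalev scalevA; congr (scalev _ (flatten _)).
  rewrite mulrNz; ring.
Qed.

Lemma Sop_theta (F : fieldType) k fuel b p (v : vec F) :
  Sop_aux k fuel b p (theta v) = theta (Sop_aux k fuel b (-p) v).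
Proof.
elim: fuel b => [|f IH] [|b] //.
rewrite !Sop_auxS theta_scalev theta_flatten -map_comp.
under eq_map => j do rewrite IH theta_alpha.
rewrite flatten_map_scalev scalevA; congr (scalev _ (flatten _)).
  rewrite mulrNz; ring.
Qed.

Lemma sign_sq (F : fieldType) (s : nat) : (-1) ^+ s * (-1) ^+ s = 1 :> F.
Proof. by rewrite -signr_odd mulr_sign; case: (odd s) => /=; rewrite ?expr1 ?expr0 ?opprK ?mulr1. Qed.

Lemma alpha_scalev (F : fieldType) k j c (v : vec F) :
  alpha k j (scalev c v) = scalev c (alpha k j v).
Proof. exact: linext_scalev. Qed.

Lemma shiftlat_theta (F : fieldType) p (v : vec F) :
  shiftlat p (theta v) = theta (shiftlat (-p) v).
Proof.
rewrite /shiftlat /theta -!map_comp; apply: eq_map => e /=.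
by rewrite opprD opprK.
Qed.

Lemma shiftlat_scalev (F : fieldType) p c (v : vec F) :
  shiftlat p (scalev c v) = scalev c (shiftlat p v).
Proof. by rewrite /shiftlat /scalev -!map_comp; apply: eq_map. Qed.

Lemma Top_scalev (F : fieldType) k fuel b p c (v : vec F) :
  Top_aux k fuel b p (scalev c v) = scalev c (Top_aux k fuel b p v).
Proof.
elim: fuel b => [|f IH] [|b] //.
rewrite !Top_auxS.
under eq_map => j do rewrite IH alpha_scalev.
by rewrite flatten_map_scalev !scalevA mulrC.
Qed.

Lemma Sop_scalev (F : fieldType) k fuel b p c (v : vec F) :
  Sop_aux k fuel b p (scalev c v) = scalev c (Sop_aux k fuel b p v).
Proof.
elim: fuel b => [|f IH] [|b] //.
rewrite !Sop_auxS.
under eq_map => j do rewrite IH alpha_scalev.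
by rewrite flatten_map_scalev !scalevA mulrC.
Qed.

Lemma exp_mode_theta (F : fieldType) k p n l q :
  exp_mode_mon F k (-p) n (l, -q) =
  scalev ((-1) ^+ size l) (theta (exp_mode_mon F k p n (l, q))).
Proof.
rewrite /exp_mode_mon theta_flatten -map_comp -flatten_map_scalev.
congr flatten; apply: eq_map => b /=.
have -> : ((2 * k)%:Z * - p * - q = (2 * k)%:Z * p * q) by ring.
case: ifP => _ //.
have E : [:: (1, (l, -q))] = scalev ((-1) ^+ size l) (theta [:: (1 : F, (l, q))]).
  by rewrite /scalev /theta /= mulr1 sign_sq.
rewrite /Sop /Top E Top_scalev Top_theta opprK shiftlat_scalev shiftlat_theta opprK.
by rewrite Sop_scalev Sop_theta opprK.
Qed.

Definition allQ {F : fieldType} (Q : pred mon) (v : vec F) := all (fun e => Q e.2) v.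

Lemma allQ_cat (F : fieldType) Q (u v : vec F) : allQ Q (u ++ v) = allQ Q u && allQ Q v.
Proof. exact: all_cat. Qed.
Lemma allQ_scalev (F : fieldType) Q c (v : vec F) : allQ Q (scalev c v) = allQ Q v.
Proof. by rewrite /allQ /scalev all_map. Qed.
Lemma allQ_flatten_map (F : fieldType) Q (A : eqType) (g : A -> vec F) s :
  (forall x, x \in s -> allQ Q (g x)) -> allQ Q (flatten (map g s)).
Proof.
elim: s => //= x s IH H; rewrite allQ_cat H ?mem_head //= IH // => y Hy.
by apply: H; rewrite inE Hy orbT.
Qed.
Lemma allQ_linext (F : fieldType) (Q Q' : pred mon) (f : mon -> vec F) v :
  (forall x, Q x -> allQ Q' (f x)) -> allQ Q v -> allQ Q' (linext f v).
Proof.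
move=> Hf; elim: v => //= e v IH /andP[He Hv].
by rewrite allQ_cat allQ_scalev Hf //= IH.
Qed.

Definition latQ (q : int) : pred mon := fun x => x.2 == q.
Definition posQ : pred mon := fun x => all (fun n => 0 < n)%N x.1.

Lemma all_take_drop (T : Type) (P : pred T) (s : seq T) i :
  all P s -> all P (take i s ++ drop i.+1 s).
Proof.
move=> H; rewrite all_cat; apply/andP; split.
  by move: H; rewrite -{1}(cat_take_drop i s) all_cat => /andP[].
by move: H; rewrite -{1}(cat_take_drop i.+1 s) all_cat => /andP[].
Qed.

Lemma alpha_mon_lat (F : fieldType) k j x q : latQ q x -> allQ (latQ q) (alpha_mon F k j x).
Proof.
case: x => l p /= Hp; case: j => [[|n]|n] /=; rewrite /allQ /= ?andbT //.
by rewrite all_map; apply/allP => i _ /=.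
Qed.

Lemma alpha_mon_pos (F : fieldType) k j x : posQ x -> allQ posQ (alpha_mon F k j x).
Proof.
case: x => l p /= Hp; case: j => [[|n]|n] /=; rewrite /allQ /posQ /= ?andbT //.
by rewrite all_map; apply/allP => i _ /=; apply: all_take_drop.
Qed.

Lemma alpha_allQ (F : fieldType) k (Q : pred mon) j (v : vec F) :
  (forall j x, Q x -> allQ Q (alpha_mon F k j x)) -> allQ Q v -> allQ Q (alpha k j v).
Proof. by move=> H; apply: allQ_linext => x; apply: H. Qed.

Lemma Top_allQ (F : fieldType) k (Q : pred mon) fuel b p (v : vec F) :
  (forall j x, Q x -> allQ Q (alpha_mon F k j x)) -> allQ Q v -> allQ Q (Top_aux k fuel b p v).
Proof.
move=> H Hv; elim: fuel b => [|f IH] [|b] //.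
rewrite Top_auxS allQ_scalev; apply: allQ_flatten_map => j _.
exact: alpha_allQ.
Qed.

Lemma Sop_allQ (F : fieldType) k (Q : pred mon) fuel b p (v : vec F) :
  (forall j x, Q x -> allQ Q (alpha_mon F k j x)) -> allQ Q v -> allQ Q (Sop_aux k fuel b p v).
Proof.
move=> H Hv; elim: fuel b => [|f IH] [|b] //.
rewrite Sop_auxS allQ_scalev; apply: allQ_flatten_map => j _.
exact: alpha_allQ.
Qed.

Lemma exp_mode_lat (F : fieldType) k p n (w : mon) :
  allQ (latQ (w.2 + p)) (exp_mode_mon F k p n w).
Proof.
rewrite /exp_mode_mon; apply: allQ_flatten_map => b _.
case: ifP => _ //; apply: Sop_allQ; first by move=> *; apply: alpha_mon_lat.
have : allQ (latQ w.2) (Top k b p [:: (1 : F, w)]).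
  apply: Top_allQ; first by move=> *; apply: alpha_mon_lat.
  by rewrite /allQ /= /latQ eqxx.
rewrite /allQ /shiftlat all_map; apply: sub_all => e /=.
by rewrite /latQ /= => /eqP ->.
Qed.

Lemma exp_mode_pos (F : fieldType) k p n (w : mon) :
  posQ w -> allQ posQ (exp_mode_mon F k p n w).
Proof.
move=> Hw; rewrite /exp_mode_mon; apply: allQ_flatten_map => b _.
case: ifP => _ //; apply: Sop_allQ; first by move=> *; apply: alpha_mon_pos.
have : allQ posQ (Top k b p [:: (1 : F, w)]).
  apply: Top_allQ; first by move=> *; apply: alpha_mon_pos.
  by rewrite /allQ /= Hw.
by rewrite /allQ /shiftlat all_map.
Qed.

Lemma Top_aux0 (F : fieldType) k f p (v : vec F) : Top_aux k f 0 p v = v.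
Proof. by case: f. Qed.

Lemma Top_zero (F : fieldType) k N f b p q (c : F) :
  (0 < b < N)%N -> Top_aux k f b p [:: (c, ([:: N], q))] = [::].
Proof.
elim: f b => [|f IH] [|b] // Hb.
rewrite Top_auxS flatten_nils // => j; rewrite mem_iota => /andP[Hj1 Hj2].
case: (ltngtP j b.+1) => Hj.
- by rewrite IH //; lia.
- lia.
- rewrite Hj subnn Top_aux0 /alpha /linext /=.
  have -> : (N == b.+1) = false by apply/eqP; lia.
  by [].
Qed.

Lemma Top_N (F : fieldType) k N' p q :
  Top k N'.+1 p [:: (1 : F, ([:: N'.+1], q))] =
  [:: (- (p%:~R / N'.+1%:R) * (1 * (2 * k * N'.+1)%:R), ([::], q))].
Proof.
rewrite /Top Top_auxS -addn1 iotaD map_cat flatten_cat flatten_nils.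
  rewrite /= add1n addn1 subnn Top_aux0 /alpha /linext /= eqxx /=.
  by [].
move=> j; rewrite mem_iota => /andP[Hj1 Hj2].
by rewrite Top_zero //; lia.
Qed.

Lemma exp_mode_T (F : fieldType) k p q N' :
  (2 * k)%:Z * p * q = (N'.+2)%:Z ->
  exp_mode_mon F k p (-2) ([:: N'.+1], q) =
  shiftlat p [:: (- (p%:~R / N'.+1%:R) * (1 * (2 * k * N'.+1)%:R), ([::], q))].
Proof.
move=> H; rewrite /exp_mode_mon (_ : sumn _ = N'.+1); last by rewrite /= addn0.
rewrite (_ : iota 0 N'.+2 = iota 0 N'.+1 ++ [:: N'.+1]); last by rewrite -addn1 iotaD.
rewrite map_cat flatten_cat flatten_nils.
  rewrite [map _ _]/= [X in X ++ _]/=.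
  have -> : (0 <= N'.+1%:Z - (2 * k)%:Z * p * q - (-2) - 1 :> int) = true by lia.
  have -> : (N'.+1%:Z - (2 * k)%:Z * p * q - (-2) - 1 :> int) = 0 by lia.
  by rewrite /Sop /= Top_N cats0.
move=> b; rewrite mem_iota => /andP[_ Hb] /=.
have -> : (0 <= b%:Z - (2 * k)%:Z * p * q - (-2) - 1 :> int) = false by lia.
by [].
Qed.

Definition Pm (x : mon) : bool :=
  [&& x.2 == 0, ~~ odd (size x.1) & all (fun n => 0 < n)%N x.1].

Lemma Pm_perm (x y : mon) : perm_eq x.1 y.1 -> x.2 = y.2 -> Pm x = Pm y.
Proof. by move=> Hp Hq; rewrite /Pm Hq (perm_size Hp) (perm_all _ Hp). Qed.

Lemma coef_filterP (F : fieldType) (v : vec F) b :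
  coef [seq e <- v | Pm e.2] b = if Pm b then coef v b else 0.
Proof.
rewrite /coef big_filter_cond; case: ifP => Hb.
  apply: eq_bigl => e; case Hc: (perm_eq _ _ && _); rewrite ?andbF //.
  by move/andP: Hc => [Hp /eqP Hq]; rewrite (Pm_perm e.2 b Hp Hq) Hb.
rewrite big1 // => e /andP[Pe /andP[Hp /eqP Hq]].
by rewrite (Pm_perm e.2 b Hp Hq) Hb in Pe.
Qed.

Lemma coef_allQ_zero (F : fieldType) (Q : pred mon) (v : vec F) b :
  allQ Q v -> (forall x y : mon, perm_eq x.1 y.1 -> x.2 = y.2 -> Q x = Q y) ->
  ~~ Q b -> coef v b = 0.
Proof.
move=> Hv HQ Hb; rewrite /coef big_seq_cond big1 // => e /andP[He /andP[Hp /eqP Hq]].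
have := allP Hv e He; rewrite (HQ _ _ Hp Hq) => Qb.
by rewrite Qb in Hb.
Qed.

Arguments exp_mode_mon : simpl never.

Lemma Evec_plus (F : fieldType) (m : int) : inVplus (Evec F m).
Proof.
split => // -[l p]; rewrite vc_theta /Evec !vc_cons !vc_nil /=.
case Hl: (perm_eq [::] l); last by rewrite /= !addr0 mulr0.
have -> : l = [::] by apply/size0nil; rewrite -(perm_size Hl).
rewrite /= expr0 mul1r !eqr_oppLR opprK.
by rewrite !addr0 addrC.
Qed.

Lemma U_plus (F : fieldType) N (m : int) :
  (0 < N)%N -> inVplus [:: (1 : F, ([:: N], m)); (-1, ([:: N], - m))].
Proof.
move=> HN; split; first by rewrite /wfv /= HN.
move=> [l p]; rewrite vc_theta !vc_cons !vc_nil /=.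
case Hl: (perm_eq [:: N] l); last by rewrite /= !addr0 mulr0.
rewrite -(perm_size Hl) /= expr1 !eqr_oppLR opprK.
by case: (m == p); case: (m == - p); rewrite /= ?addr0 ?add0r ?mulN1r ?opprK ?oppr0 // opprD opprK addrC.
Qed.
Arguments exp_mode_mon : simpl never.
Lemma linext_cons (F : fieldType) (f : mon -> vec F) e v :
  linext f (e :: v) = scalev e.1 (f e.2) ++ linext f v.
Proof. by []. Qed.
Lemma linext_nil (F : fieldType) (f : mon -> vec F) : linext f [::] = [::].
Proof. by []. Qed.

Theorem lemma4p1 (F : fieldType) (k : nat) :
  [pchar F] =i pred0 -> (3 <= k)%N ->
  forall m : nat, (0 < m)%N ->
  exists (w c : vec F),
    inM1plus w /\ inC2plus k c /\
    forall b : mon, coef (Evec F (2 * m)%N%:Z) b = coef w b + coef c b.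
Proof.
move=> Hch Hk m Hm.
have Hc := (pcharf0P _).1 Hch.
set N' := (2 * k * m * m - 2)%N.
have HN2 : N'.+2 = (2 * k * m * m)%N.
  have : (1 <= m * m)%N by rewrite muln_gt0 Hm.
  rewrite /N'; nia.
set N := N'.+1.
set U : vec F := [:: (1, ([:: N], m%:Z)); (-1, ([:: N], - m%:Z))].
set E := Evec F m%:Z.
have [Z HZ] : exists Z, exp_mode_mon F k m%:Z (-2) ([:: N], - m%:Z) = Z by eexists.
set K : F := (2 * k * m)%:R.
have HK : K != 0 by rewrite /K Hc !muln_eq0 negb_or negb_or; lia.
have HNF : (N%:R : F) != 0 by rewrite Hc.
exists (scalev K^-1 [seq e <- scalev (-1) (Z ++ theta Z) | Pm e.2]),
       (scalev (- K^-1) (mode k E (-2) U)).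
split.
  rewrite /inM1plus /scalev all_map; apply/allP => e; rewrite mem_filter => /andP[He _].
  exact: He.
split.
  exists [:: (- K^-1, E, U)]; split.
    move=> t; rewrite inE => /eqP -> /=; split; [exact: Evec_plus | exact: U_plus].
  by move=> b; rewrite vc_scalev big_cons big_nil addr0.
move=> [l p].
have T1 : exp_mode_mon F k m%:Z (-2) ([:: N], m%:Z) = [:: (-K, ([::], (2 * m)%N%:Z))].
  rewrite exp_mode_T; last by rewrite HN2 !PoszM.
  rewrite /shiftlat /=; congr [:: (_, (_, _))].
    rewrite /K /N !natrM pmulrn; field; by move: HNF; rewrite /N mulrS.
  by rewrite mul2n -addnn PoszD.
have T4 : exp_mode_mon F k (- m%:Z) (-2) ([:: N], - m%:Z) = [:: (K, ([::], - (2 * m)%N%:Z))].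
  rewrite exp_mode_T; last first.
    rewrite (_ : (2 * k)%:Z * - m%:Z * - m%:Z = (2 * k)%:Z * m%:Z * m%:Z); last by ring.
    by rewrite HN2 !PoszM.
  rewrite /shiftlat /=; congr [:: (_, (_, _))].
    rewrite /K /N !natrM mulrNz pmulrn; field; by move: HNF; rewrite /N mulrS.
  by rewrite mul2n -addnn PoszD opprD.
have T3 : exp_mode_mon F k (- m%:Z) (-2) ([:: N], m%:Z) = scalev (-1) (theta Z).
  by have := exp_mode_theta F k m%:Z (-2) [:: N] (- m%:Z); rewrite opprK expr1 HZ.
have HZl : allQ (latQ 0) Z.
  by have := exp_mode_lat F k m%:Z (-2) ([:: N], - m%:Z); rewrite addNr HZ.
have HZp : allQ posQ Z by rewrite -HZ; apply: exp_mode_pos.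
rewrite /mode /E /Evec /U /=.
rewrite !linext_cons /= T1 T3 T4 !linext_nil HZ.
do 6! rewrite ?vc_cat ?vc_scalev ?vc_cons ?vc_nil.
rewrite coef_filterP vc_scalev vc_cat vc_theta.
have key : (if Pm (l, p)
   then -1 * (coef Z (l, p) + (-1) ^+ size l * coef Z (l, - p)) else 0) =
   -1 * (coef Z (l, p) + (-1) ^+ size l * coef Z (l, - p)).
  case HP: (Pm (l, p)) => //.
  have latI : forall x y : mon, perm_eq x.1 y.1 -> x.2 = y.2 -> latQ 0 x = latQ 0 y.
    by move=> x y _ Hxy; rewrite /latQ Hxy.
  have posI : forall x y : mon, perm_eq x.1 y.1 -> x.2 = y.2 -> posQ x = posQ y.
    by move=> x y Hxy _; rewrite /posQ (perm_all _ Hxy).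
  case Hp0: (p == 0).
    move/eqP: Hp0 => Hp0; subst p; rewrite oppr0.
    case Hpos: (all (fun n => 0 < n)%N l).
      move: HP; rewrite /Pm /= Hpos andbT => /negbFE Hodd.
      by rewrite -signr_odd Hodd expr1 mulN1r mulN1r addrN oppr0.
    rewrite (@coef_allQ_zero F posQ Z (l, 0) HZp posI) ?mulr0 ?addr0 ?mulr0 ?oppr0 //.
    by rewrite /posQ /= Hpos.
  rewrite (@coef_allQ_zero F (latQ 0) Z (l, p) HZl latI) ?(@coef_allQ_zero F (latQ 0) Z (l, - p) HZl latI) ?mulr0 ?addr0 ?mulr0 ?oppr0 //.
    by rewrite /latQ /= oppr_eq0 Hp0.
  by rewrite /latQ /= Hp0.
rewrite key /=.
set C1 := (perm_eq [::] l && ((2 * m)%N%:Z == p)).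
set C2 := (perm_eq [::] l && (- (2 * m)%N%:Z == p)).
case: C1; case: C2; field; rewrite !Hc; apply/and3P; split; lia.
Qed.
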